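(* Let $\lambda>0$. Consider $\mathcal{UNB}(r,p)$ distributions with $r\to\infty$ and $p=p(r)\in(0,1)$ such that $P:=q/p\to0$ and $rP\to\lambda$, where $q=1-p$. Then for each fixed $x\in\{0,1,2,\dots\}$ the $\mathcal{UNB}(r,p)$ probability of $x$ converges to $$\frac{\lambda^{x}e^{-\lambda}}{(x+1)!}\,{}_1F_1(1;x+2;\lambda),$$ which is the probability mass function of the uniform-Poisson distribution $\mathcal{UP}(\lambda)$.
   Context: $\mathcal{UNB}(r,p)$ ($r>0$, $0<p<1$) is the law of $X$ where $N$ is negative binomial with $P(N=n)=\binom{r+n-1}{n}p^rq^n$, $n\ge0$, and $X\mid N=n$ is uniform on $\{0,1,\dots,n\}$; its pmf is $\frac{q^xp^r}{1+x}\binom{r+x-1}{x}{}_2F_1(1,r+x;2+x;q)$, with $\binom{r+x-1}{x}=\frac{\Gamma(r+x)}{x!\Gamma(r)}$ and ${}_2F_1(a,b;c;z)=\sum_{n\ge0}\frac{(a)_n(b)_n}{(c)_n}\frac{z^n}{n!}$. The confluent hypergeometric function is ${}_1F_1(a;c;z)=\sum_{n\ge0}\frac{(a)_n}{(c)_n}\frac{z^n}{n!}$; here $(s)_n=s(s+1)\cdots(s+n-1)$, $(s)_0=1$. The uniform-Poisson law $\mathcal{UP}(\lambda)$ is that of $X$ where $N\sim$ Poisson$(\lambda)$ and $X\mid N=n$ is uniform on $\{0,\dots,n\}$. *)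

(* Defs.v *)
From Stdlib Require Import Reals.
From Coquelicot Require Import Coquelicot.
Open Scope R_scope.

Fixpoint poch (s : R) (n : nat) : R :=
  match n with
  | O => 1
  | S k => poch s k * (s + INR k)
  end.

(* Generalized binomial coefficient binom(r+x-1, x) = Gamma(r+x)/(x! Gamma(r))
   = (r)_x / x!  (for r > 0). *)
Definition gbinom (r : R) (x : nat) : R := poch r x / INR (Stdlib.Arith.Factorial.fact x).

Definition hyp2F1 (a b c z : R) : R :=
  Series (fun n => poch a n * poch b n / poch c n * z ^ n / INR (Stdlib.Arith.Factorial.fact n)).

Definition hyp1F1 (a c z : R) : R :=
  Series (fun n => poch a n / poch c n * z ^ n / INR (Stdlib.Arith.Factorial.fact n)).

Definition unb_pmf (r p : R) (x : nat) : R :=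
  let q := 1 - p in
  q ^ x * Rpower p r / (1 + INR x) * gbinom r x
    * hyp2F1 1 (r + INR x) (2 + INR x) q.

(* pmf of the uniform-Poisson law UP(lambda) at x, by definition of the mixture:
   P(X = x) = sum_{n >= x} P(N = n) * 1/(n+1), N ~ Poisson(lambda). *)
Definition up_pmf (lam : R) (x : nat) : R :=
  Series (fun n => if Nat.leb x n
                   then exp (- lam) * lam ^ n / INR (Stdlib.Arith.Factorial.fact n) / (INR n + 1)
                   else 0).

(* Main.v *)
Require Import Defs.
From Stdlib Require Import Reals Lia Lra.
From Coquelicot Require Import Coquelicot.
Open Scope R_scope.

Lemma lim_mult' f g (a b : R) : is_lim f p_infty a -> is_lim g p_infty b ->
  is_lim (fun y => f y * g y) p_infty (a*b).
Proof. intros Hf Hg. exact (is_lim_mult f g p_infty a b Hf Hg I). Qed.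

Lemma lim_plus' f g (a b : R) : is_lim f p_infty a -> is_lim g p_infty b ->
  is_lim (fun y => f y + g y) p_infty (a+b).
Proof. intros Hf Hg. eapply is_lim_plus; eauto. reflexivity. Qed.

Lemma lim_inv' f (a : R) : is_lim f p_infty a -> a <> 0 ->
  is_lim (fun y => / f y) p_infty (/ a).
Proof. intros Hf Ha. apply (is_lim_inv f p_infty a Hf). intro E; apply Ha; injection E; auto. Qed.

Lemma lim_eps f (l : R) : is_lim f p_infty l ->
  forall eps, 0 < eps -> exists M, forall r, M < r -> Rabs (f r - l) < eps.
Proof. intros H eps He. apply is_lim_spec in H. exact (H (mkposreal eps He)). Qed.

Lemma Series_0' : Series (fun _ => 0) = 0.
Proof.
  rewrite (Series_ext (fun _ => 0) (fun n => 0 * 1)) by (intros; ring).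
  rewrite Series_scal_l; ring.
Qed.

Lemma tannery (f : R -> nat -> R) (g D : nat -> R) :
 ex_series D ->
 (exists M, forall r, M < r -> forall n, 0 <= f r n <= D n) ->
 (forall n, is_lim (fun r => f r n) p_infty (g n)) ->
 is_lim (fun r => Series (f r)) p_infty (Series g).
Proof.
  intros HD [M HM] Hl.
  assert (Hg : forall n, 0 <= g n <= D n).
  { intros n. split.
    - apply (is_lim_le_loc (fun _ => 0) (fun r => f r n) p_infty 0 (g n)).
      exists M; intros r Hr; apply HM; auto. apply is_lim_const. apply Hl.
    - apply (is_lim_le_loc (fun r => f r n) (fun _ => D n) p_infty (g n) (D n)).
      exists M; intros r Hr; apply HM; auto. apply Hl. apply is_lim_const. }
  assert (Hexg : ex_series g).
  { apply (ex_series_le g D); auto. intros n; change (Rabs (g n) <= D n).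
    rewrite Rabs_pos_eq; apply Hg. }
  assert (Hexf : forall r, M < r -> ex_series (f r)).
  { intros r Hr. apply (ex_series_le (f r) D); auto. intros n; change (Rabs (f r n) <= D n).
    rewrite Rabs_pos_eq; apply HM; auto. }
  apply is_lim_spec. intros [eps He]. simpl.
  assert (He3 : 0 < eps / 3) by lra.
  destruct HD as [SD HSD].
  pose proof HSD as HSD'. apply is_series_Reals in HSD'.
  destruct (HSD' (eps/3) He3) as [N HN].
  assert (HT : Series (fun k => D (S N + k)%nat) < eps / 3).
  { pose proof (Series_incr_n D (S N) (Nat.lt_0_succ N) (ex_intro _ SD HSD)) as E.
    rewrite (is_series_unique D SD HSD) in E. simpl pred in E.
    specialize (HN N (le_n N)). unfold R_dist in HN.
    apply Rabs_def2 in HN; lra. }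
  assert (Hfin : is_lim (fun r => sum_f_R0 (f r) N) p_infty (sum_f_R0 g N)).
  { clear HN HT. induction N as [|N IH]; simpl. apply Hl.
    apply lim_plus'; auto. }
  destruct (lim_eps _ _ Hfin (eps/3) He3) as [M1 HM1].
  exists (Rmax M M1). intros r Hr.
  assert (HrM : M < r) by (eapply Rle_lt_trans; [apply Rmax_l|exact Hr]).
  assert (HrM1 : M1 < r) by (eapply Rle_lt_trans; [apply Rmax_r|exact Hr]).
  rewrite (Series_incr_n (f r) (S N) (Nat.lt_0_succ N) (Hexf r HrM)).
  rewrite (Series_incr_n g (S N) (Nat.lt_0_succ N) Hexg). simpl pred.
  specialize (HM1 r HrM1).
  assert (HexDt : ex_series (fun k => D (S N + k)%nat)).
  { apply ex_series_incr_n. exists SD; exact HSD. }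
  assert (T1 : 0 <= Series (fun k => f r (S N + k)%nat) <= Series (fun k => D (S N + k)%nat)).
  { split.
    - rewrite <- Series_0'. apply Series_le.
      intros n; split; [lra|apply HM; auto]. apply ex_series_incr_n, Hexf; auto.
    - apply Series_le; auto; intros n; apply HM; auto. }
  assert (T2 : 0 <= Series (fun k => g (S N + k)%nat) <= Series (fun k => D (S N + k)%nat)).
  { split.
    - rewrite <- Series_0'. apply Series_le.
      intros n; split; [lra|apply Hg]. apply ex_series_incr_n, Hexg.
    - apply Series_le; auto. }
  apply Rabs_def1; apply Rabs_def2 in HM1; lra.
Qed.
Lemma poch1 n : poch 1 n = INR (Factorial.fact n).
Proof.
  induction n as [|n IH]; simpl poch. simpl; lra.
  rewrite IH, fact_simpl, mult_INR, S_INR; ring.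
Qed.

Lemma poch_pos s n : 0 < s -> 0 < poch s n.
Proof.
  intros Hs; induction n as [|n IH]; simpl poch. lra.
  apply Rmult_lt_0_compat; auto. pose proof (pos_INR n); lra.
Qed.

Lemma fact_poch x n : INR (Factorial.fact (x+1)) * poch (INR x + 2) n
  = INR (Factorial.fact (x + n)) * (INR (x+n) + 1).
Proof.
  induction n as [|n IH].
  - rewrite Nat.add_0_r, Nat.add_1_r, fact_simpl, mult_INR, S_INR; simpl poch; ring.
  - simpl poch. rewrite <- Rmult_assoc, IH, Nat.add_succ_r, fact_simpl, mult_INR, S_INR, plus_INR.
    ring.
Qed.

Lemma part2 lam x : lam ^ x * exp (- lam) / INR (Factorial.fact (x + 1)) * hyp1F1 1 (INR x + 2) lam
     = up_pmf lam x.
Proof.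
  unfold hyp1F1, up_pmf.
  rewrite <- Series_scal_l.
  symmetry; rewrite (Series_incr_n_aux _ x); cycle 1.
  { intros k Hk. destruct (Nat.leb x k) eqn:E. apply Nat.leb_le in E; lia. reflexivity. }
  symmetry.
  apply Series_ext; intros n.
  replace (Nat.leb x (x+n)) with true by (symmetry; apply Nat.leb_le; lia).
  rewrite poch1.
  pose proof (fact_poch x n) as F.
  pose proof (INR_fact_lt_0 (x+1)). pose proof (INR_fact_lt_0 n). pose proof (INR_fact_lt_0 (x+n)).
  assert (0 < poch (INR x + 2) n) by (apply poch_pos; pose proof (pos_INR x); lra).
  assert (0 < INR (x+n) + 1) by (pose proof (pos_INR (x+n)); lra).
  rewrite pow_add.
  field_simplify; try lra.
  rewrite F. f_equal. ring.
Qed.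

Lemma lim_eq f (l l' : R) : is_lim f p_infty l -> l = l' -> is_lim f p_infty l'.
Proof. intros H ->; exact H. Qed.

Lemma lim_ext f g (l : R) M : (forall r, M < r -> f r = g r) -> is_lim f p_infty l -> is_lim g p_infty l.
Proof. intros H; apply is_lim_ext_loc. exists M; auto. Qed.

Lemma ln_le_sub1 y : 0 < y -> ln y <= y - 1.
Proof.
  intros Hy. pose proof (exp_ineq1_le (y - 1)) as E.
  destruct (Rle_lt_or_eq_dec y (exp (y-1))) as [L|L]; [lra| |].
  - left. rewrite <- (ln_exp (y-1)). apply ln_increasing; auto.
  - right. rewrite L at 1. rewrite ln_exp; reflexivity.
Qed.

Section Lims.
Variables (lam : R) (p : R -> R).
Hypothesis hp : Rbar_locally p_infty (fun r => 0 < p r < 1).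
Hypothesis hP0 : is_lim (fun r => (1 - p r) / p r) p_infty 0.
Hypothesis hrP : is_lim (fun r => r * ((1 - p r) / p r)) p_infty lam.

Lemma q_lim : is_lim (fun r => 1 - p r) p_infty 0.
Proof.
  destruct hp as [M0 HM0].
  apply (lim_ext (fun r => ((1 - p r) / p r) * / (1 + (1 - p r) / p r)) _ _ M0).
  { intros r Hr; specialize (HM0 r Hr). field. split; [|lra].
    replace (p r + (1 - p r)) with 1 by ring; lra. }
  apply (lim_eq _ (0 * / (1 + 0))); [|field].
  apply lim_mult'; auto. apply lim_inv'; [|lra]. apply lim_plus'; auto. apply is_lim_const.
Qed.

Lemma rq_lim : is_lim (fun r => r * (1 - p r)) p_infty lam.
Proof.
  destruct hp as [M0 HM0].
  apply (lim_ext (fun r => (r * ((1 - p r) / p r)) * / (1 + (1 - p r) / p r)) _ _ M0).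
  { intros r Hr; specialize (HM0 r Hr). field. split; [|lra].
    replace (p r + (1 - p r)) with 1 by ring; lra. }
  apply (lim_eq _ (lam * / (1 + 0))); [|field].
  apply lim_mult'; auto. apply lim_inv'; [|lra]. apply lim_plus'; auto. apply is_lim_const.
Qed.

Lemma prod_lim c k : is_lim (fun r => (1 - p r)^k * poch (r + c) k) p_infty (lam^k).
Proof.
  induction k as [|k IH].
  - simpl. apply (lim_ext (fun _ => 1) _ _ 0); [intros; ring|apply is_lim_const].
  - apply (lim_ext (fun r => ((1 - p r)^k * poch (r + c) k) * (r * (1 - p r) + (c + INR k) * (1 - p r))) _ _ 0).
    { intros r _; simpl; ring. }
    apply (lim_eq _ (lam^k * (lam + (c + INR k) * 0))); [|simpl; ring].
    apply lim_mult'; auto. apply lim_plus'. apply rq_lim.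
    apply lim_mult'. apply is_lim_const. apply q_lim.
Qed.

Lemma rpow_lim : is_lim (fun r => Rpower (p r) r) p_infty (exp (- lam)).
Proof.
  assert (H : is_lim (fun r => r * ln (p r)) p_infty (- lam)).
  { destruct hp as [M0 HM0].
    apply (is_lim_le_le_loc (fun r => -1 * (r * ((1 - p r) / p r))) (fun r => -1 * (r * (1 - p r)))).
    - exists (Rmax M0 0). intros r Hr.
      assert (Hr0 : M0 < r) by (eapply Rle_lt_trans; [apply Rmax_l|exact Hr]).
      assert (Hr1 : 0 < r) by (eapply Rle_lt_trans; [apply Rmax_r|exact Hr]).
      specialize (HM0 r Hr0).
      pose proof (ln_le_sub1 (p r) ltac:(lra)) as L1.
      pose proof (ln_le_sub1 (/ p r) ltac:(apply Rinv_0_lt_compat; lra)) as L2.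
      rewrite ln_Rinv in L2 by lra.
      assert (E : / p r - 1 = (1 - p r) / p r) by (field; lra).
      rewrite E in L2.
      split; [|nra]. 
      assert (- ((1 - p r) / p r) <= ln (p r)) by lra. nra.
    - apply (lim_eq _ (-1 * lam)); [|ring]. apply lim_mult'; auto. apply is_lim_const.
    - apply (lim_eq _ (-1 * lam)); [|ring]. apply lim_mult'. apply is_lim_const. apply rq_lim. }
  destruct hp as [M0 HM0].
  apply (lim_ext (fun r => exp (r * ln (p r))) _ _ M0).
  { intros r Hr; unfold Rpower; reflexivity. }
  apply (is_lim_comp_continuous _ exp p_infty (-lam) H (continuous_exp (-lam))).
Qed.

End Lims.

Fixpoint Dseq (A : R) (n : nat) : R :=
  match n with
  | O => 1
  | S k => Dseq A k * ((A + INR k / 2) / (INR k + 1))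
  end.

Lemma Dseq_pos A n : 0 < A -> 0 < Dseq A n.
Proof.
  intros HA; induction n as [|n IH]; simpl. lra.
  apply Rmult_lt_0_compat; auto. pose proof (pos_INR n).
  apply Rdiv_lt_0_compat; lra.
Qed.

Lemma Dseq_ex A : 0 < A -> ex_series (Dseq A).
Proof.
  intros HA. apply ex_series_Rabs. apply (ex_series_DAlembert _ (1/2)); [lra| |].
  - intros n; pose proof (Dseq_pos A n HA); lra.
  - apply (is_lim_seq_ext (fun n => 1/2 + (A - 1/2) * / (INR n + 1))).
    { intros n. simpl Dseq. pose proof (Dseq_pos A n HA). pose proof (pos_INR n).
      rewrite Rabs_pos_eq.
      - field; lra.
      - apply Rdiv_le_0_compat; [|apply Dseq_pos; auto].
        apply Rmult_le_pos; [lra|]. apply Rlt_le, Rdiv_lt_0_compat; lra. }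
    replace (Finite (1/2)) with (Finite (1/2 + (A - 1/2) * 0)) by (f_equal; ring).
    apply is_lim_seq_plus'. apply is_lim_seq_const.
    apply is_lim_seq_mult'. apply is_lim_seq_const.
    assert (H : is_lim_seq (fun n => INR n + 1) p_infty).
    { eapply is_lim_seq_plus. apply is_lim_seq_INR. apply is_lim_seq_const. reflexivity. }
    apply (is_lim_seq_inv _ _ H). discriminate.
Qed.

Lemma dom_bound q s c A : 0 <= q <= 1/2 -> 0 <= s -> q * s <= A -> 0 <= c ->
  forall n, 0 <= q^n * poch s n / poch (2 + c) n <= Dseq A n.
Proof.
  intros Hq Hs HA Hc n. induction n as [|n IH]; simpl. lra.
  pose proof (pos_INR n).
  assert (Hp : 0 < poch (2 + c) n) by (apply poch_pos; lra).
  replace (q * q ^ n * (poch s n * (s + INR n)) / (poch (2 + c) n * (2 + c + INR n)))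
    with ((q ^ n * poch s n / poch (2 + c) n) * (q * (s + INR n) * / (2 + c + INR n)))
    by (field; lra).
  assert (B : 0 <= q * (s + INR n) * / (2 + c + INR n) <= (A + INR n / 2) / (INR n + 1)).
  { split.
    - apply Rmult_le_pos; [apply Rmult_le_pos; lra|]. apply Rlt_le, Rinv_0_lt_compat; lra.
    - unfold Rdiv. apply Rmult_le_compat.
      + apply Rmult_le_pos; lra.
      + apply Rlt_le, Rinv_0_lt_compat; lra.
      + nra.
      + apply Rinv_le_contravar; lra. }
  split. apply Rmult_le_pos; lra.
  apply Rmult_le_compat; lra.
Qed.

Section Main.
Variables (lam : R) (p : R -> R).
Hypothesis hlam : 0 < lam.
Hypothesis hp : Rbar_locally p_infty (fun r => 0 < p r < 1).
Hypothesis hP0 : is_lim (fun r => (1 - p r) / p r) p_infty 0.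
Hypothesis hrP : is_lim (fun r => r * ((1 - p r) / p r)) p_infty lam.

Lemma H_lim x : is_lim (fun r => hyp2F1 1 (r + INR x) (2 + INR x) (1 - p r)) p_infty
   (hyp1F1 1 (INR x + 2) lam).
Proof.
  unfold hyp2F1, hyp1F1. apply tannery with (D := Dseq (lam + 1)).
  - apply Dseq_ex; lra.
  - pose proof hp as [M0 HM0].
    destruct (lim_eps _ _ (q_lim _ hp hP0) (1/2) ltac:(lra)) as [M1 HM1].
    destruct (lim_eps _ _ (prod_lim lam p hp hP0 hrP (INR x) 1) 1 ltac:(lra)) as [M2 HM2].
    exists (Rmax (Rmax M0 M1) (Rmax M2 0)). intros r Hr n.
    assert (H0 : M0 < r) by (eapply Rle_lt_trans; [|exact Hr]; eapply Rle_trans; [apply Rmax_l|apply Rmax_l]).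
    assert (H1 : M1 < r) by (eapply Rle_lt_trans; [|exact Hr]; eapply Rle_trans; [apply Rmax_r|apply Rmax_l]).
    assert (H2 : M2 < r) by (eapply Rle_lt_trans; [|exact Hr]; eapply Rle_trans; [apply Rmax_l|apply Rmax_r]).
    assert (H3 : 0 < r) by (eapply Rle_lt_trans; [|exact Hr]; eapply Rle_trans; [apply Rmax_r|apply Rmax_r]).
    specialize (HM0 r H0). specialize (HM1 r H1). specialize (HM2 r H2).
    simpl in HM2. apply Rabs_def2 in HM1. apply Rabs_def2 in HM2.
    pose proof (pos_INR x).
    rewrite poch1.
    replace (INR (Factorial.fact n) * poch (r + INR x) n / poch (2 + INR x) n * (1 - p r) ^ n / INR (Factorial.fact n))
      with ((1 - p r) ^ n * poch (r + INR x) n / poch (2 + INR x) n).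
    2:{ assert (poch (2 + INR x) n <> 0) by (apply Rgt_not_eq, poch_pos; lra).
        pose proof (INR_fact_neq_0 n). field; repeat split; assumption. }
    apply dom_bound; try lra. 
  - intros n.
    apply (lim_ext (fun r => (poch 1 n / poch (2 + INR x) n / INR (Factorial.fact n)) *
        ((1 - p r) ^ n * poch (r + INR x) n)) _ _ 0).
    { intros r _. assert (poch (2 + INR x) n <> 0) by (apply Rgt_not_eq, poch_pos; pose proof (pos_INR x); lra).
        pose proof (INR_fact_neq_0 n). field; repeat split; assumption. }
    apply (lim_eq _ ((poch 1 n / poch (2 + INR x) n / INR (Factorial.fact n)) * lam ^ n)).
    + apply lim_mult'. apply is_lim_const. apply prod_lim; auto.
    + assert (poch (2 + INR x) n <> 0) by (apply Rgt_not_eq, poch_pos; pose proof (pos_INR x); lra).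
      pose proof (INR_fact_neq_0 n). rewrite (Rplus_comm 2). rewrite (Rplus_comm 2) in H.
      field; repeat split; assumption.
Qed.

End Main.

Theorem mainTheorem7 (lam : R) (hlam : 0 < lam) (p : R -> R)
  (hp : Rbar_locally p_infty (fun r => 0 < p r < 1))
  (hP0 : is_lim (fun r => (1 - p r) / p r) p_infty 0)
  (hrP : is_lim (fun r => r * ((1 - p r) / p r)) p_infty lam)
  (x : nat) :
  is_lim (fun r => unb_pmf r (p r) x) p_infty
    (lam ^ x * exp (- lam) / INR (Stdlib.Arith.Factorial.fact (x + 1)) * hyp1F1 1 (INR x + 2) lam)
  /\ lam ^ x * exp (- lam) / INR (Stdlib.Arith.Factorial.fact (x + 1)) * hyp1F1 1 (INR x + 2) lam
     = up_pmf lam x.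
Proof.
  split; [|apply part2].
  apply (lim_ext (fun r => ((1 - p r) ^ x * poch (r + 0) x) * / INR (Factorial.fact x) * Rpower (p r) r
     * / (1 + INR x) * hyp2F1 1 (r + INR x) (2 + INR x) (1 - p r)) _ _ 0).
  { intros r _. unfold unb_pmf, gbinom. rewrite Rplus_0_r.
    pose proof (INR_fact_neq_0 x). assert (1 + INR x <> 0) by (pose proof (pos_INR x); lra).
    field; repeat split; assumption. }
  apply (lim_eq _ (lam ^ x * / INR (Factorial.fact x) * exp (- lam) * / (1 + INR x) * hyp1F1 1 (INR x + 2) lam)).
  - apply lim_mult'; [|apply H_lim; auto].
    apply lim_mult'; [|apply is_lim_const].
    apply lim_mult'; [|apply rpow_lim; auto].
    apply lim_mult'; [|apply is_lim_const].
    apply prod_lim; auto.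
  - rewrite Nat.add_1_r, fact_simpl, mult_INR, S_INR.
    pose proof (INR_fact_neq_0 x). assert (INR x + 1 <> 0) by (pose proof (pos_INR x); lra).
    field; repeat split; assumption.
Qed.
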